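(* Let $A,B\in S(2n,\mathbb{R})$, let $\{v_1,\dots,v_{2n}\}$ be a symplectic basis for $A$ and $\{w_1,\dots,w_{2n}\}$ a symplectic basis for $B$. If $v_i^TJv_j = w_i^TJw_j$ for all $1\le i<j\le 2n$ (equality of the ordered tuples of basis-values), then there exists $P\in\operatorname{Sp}(2n)$ with $A = P^TBP$.
   Context: $S(2n,\mathbb{R})$ is the set of invertible skew-symmetric real $2n\times2n$ matrices; $J$ is block-diagonal with $n$ blocks $J_0 = \begin{bmatrix} 0 & 1 \\ -1 & 0\end{bmatrix}$; $\operatorname{Sp}(2n) = \{P : P^TJP = J\}$. A basis $\{v_1,\dots,v_{2n}\}$ of $\mathbb{R}^{2n}$ is a symplectic basis for $A$ if $v_{2i-1}^TAv_{2i} = 1$ for $1\le i\le n$ and $v_i^TAv_j = 0$ for all $i<j$ with $(i,j)\neq(2k-1,2k)$ for every $k$. *)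

(* Defs.v *)
From HB Require Import structures.
From mathcomp Require Import all_boot all_order all_algebra.
From mathcomp Require Import reals.
Set Implicit Arguments. Unset Strict Implicit. Unset Printing Implicit Defensive.
Import Order.TTheory GRing.Theory Num.Theory.
Local Open Scope ring_scope.

(* Indices are 0-based: i : 'I_(2*n) stands for the paper's index i+1.
   The paper's pair (2k-1, 2k) (1-based) becomes (2k, 2k+1) (0-based). *)

Definition bform (R : realType) (m : nat) (M : 'M[R]_m) (x y : 'cV[R]_m) : R :=
  (x^T *m M *m y) 0 0.

(* J = block-diagonal with n blocks J0 = [[0,1],[-1,0]] *)
Definition Jmx (R : realType) (n : nat) : 'M[R]_(2 * n) :=
  \matrix_(i, j)
    (if ~~ odd i && (j == i.+1 :> nat) then 1
     else if ~~ odd j && (i == j.+1 :> nat) then -1 else 0).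

Definition inS (R : realType) (n : nat) (A : 'M[R]_(2 * n)) : Prop :=
  A^T = - A /\ A \in unitmx.

Definition inSp (R : realType) (n : nat) (P : 'M[R]_(2 * n)) : Prop :=
  P^T *m Jmx R n *m P = Jmx R n.

Definition is_basis (R : realType) (m : nat) (v : 'I_m -> 'cV[R]_m) : Prop :=
  (\matrix_(i, j) v j i 0) \in unitmx.

Definition symplectic_basis (R : realType) (n : nat) (A : 'M[R]_(2 * n))
    (v : 'I_(2 * n) -> 'cV[R]_(2 * n)) : Prop :=
  is_basis v /\
  forall i j : 'I_(2 * n), (i < j)%N ->
    bform A (v i) (v j) = (if ~~ odd i && (j == i.+1 :> nat) then 1 else 0).

(* Main.v *)
Require Import Defs.
From HB Require Import structures.
From mathcomp Require Import all_boot all_order all_algebra.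
From mathcomp Require Import reals.
From mathcomp Require Import lra zify.
Import Order.TTheory GRing.Theory Num.Theory.
Local Open Scope ring_scope.

Lemma skew_conj (R : realType) m (M : 'M[R]_m) (Q : 'M[R]_m) :
  M^T = - M -> (Q^T *m M *m Q)^T = - (Q^T *m M *m Q).
Proof. by move=> HM; rewrite !trmx_mul trmxK HM mulNmx mulmxN mulmxA. Qed.

Lemma skew_eq (R : realType) m (M N : 'M[R]_m) :
  M^T = - M -> N^T = - N ->
  (forall i j : 'I_m, (i < j)%N -> M i j = N i j) -> M = N.
Proof.
move=> HM HN H; apply/matrixP => i j.
have sM : forall a b, M a b = - M b a.
  by move=> a b; have := congr1 (fun X : 'M[R]_m => X b a) HM; rewrite !mxE.
have sN : forall a b, N a b = - N b a.
  by move=> a b; have := congr1 (fun X : 'M[R]_m => X b a) HN; rewrite !mxE.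
case: (ltngtP i j) => [lt|gt|eq]; first exact: H.
  by rewrite sM sN H.
have -> : j = i by apply: val_inj.
have h1 := sM i i; have h2 := sN i i.
have -> : M i i = 0 by lra.
have -> : N i i = 0 by lra.
by [].
Qed.

Lemma Jmx_skew (R : realType) n : (Jmx R n)^T = - Jmx R n.
Proof.
apply/matrixP => i j; rewrite !mxE.
case E1: (~~ odd i && (j == i.+1 :> nat)); case E2: (~~ odd j && (i == j.+1 :> nat)) => //=.
- move/andP: E1 => [_ /eqP e1]; move/andP: E2 => [_ /eqP e2]; lia.
- by rewrite opprK.
- by rewrite oppr0.
Qed.

Lemma conj_entry (R : realType) m (M : 'M[R]_m) (v : 'I_m -> 'cV[R]_m) i j :
  ((\matrix_(a, b) v b a 0)^T *m M *m (\matrix_(a, b) v b a 0)) i j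
  = bform M (v i) (v j).
Proof.
rewrite /bform !mxE; apply: eq_bigr => k _; rewrite !mxE; congr (_ * _).
by apply: eq_bigr => l _; rewrite !mxE.
Qed.

Theorem mainTheorem15 (R : realType) (n : nat) (A B : 'M[R]_(2 * n))
    (v w : 'I_(2 * n) -> 'cV[R]_(2 * n)) :
  inS A -> inS B ->
  symplectic_basis A v -> symplectic_basis B w ->
  (forall i j : 'I_(2 * n), (i < j)%N ->
     bform (Jmx R n) (v i) (v j) = bform (Jmx R n) (w i) (w j)) ->
  exists P : 'M[R]_(2 * n), inSp P /\ A = P^T *m B *m P.
Proof.
move=> [sA _] [sB _] [Vu Hv] [_ Hw] HJ.
set V := \matrix_(i, j) v j i 0 in Vu.
set W := \matrix_(i, j) w j i 0.
have EJ : V^T *m Jmx R n *m V = W^T *m Jmx R n *m W.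
  apply: skew_eq; try apply: skew_conj; try exact: Jmx_skew.
  by move=> i j lt; rewrite !conj_entry HJ.
have EA : V^T *m A *m V = W^T *m B *m W.
  apply: skew_eq; try apply: skew_conj => //.
  by move=> i j lt; rewrite !conj_entry Hv // Hw.
exists (W *m invmx V); split.
  rewrite /inSp.
  have -> : (W *m invmx V)^T *m Jmx R n *m (W *m invmx V)
      = (invmx V)^T *m (W^T *m Jmx R n *m W) *m invmx V by rewrite trmx_mul !mulmxA.
  rewrite -EJ.
  have -> : (invmx V)^T *m (V^T *m Jmx R n *m V) *m invmx V
      = (V *m invmx V)^T *m Jmx R n *m (V *m invmx V) by rewrite trmx_mul !mulmxA.
  by rewrite mulmxV // trmx1 mul1mx mulmx1.
have -> : (W *m invmx V)^T *m B *m (W *m invmx V)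
    = (invmx V)^T *m (W^T *m B *m W) *m invmx V by rewrite trmx_mul !mulmxA.
rewrite -EA.
have -> : (invmx V)^T *m (V^T *m A *m V) *m invmx V
    = (V *m invmx V)^T *m A *m (V *m invmx V) by rewrite trmx_mul !mulmxA.
by rewrite mulmxV // trmx1 mul1mx mulmx1.
Qed.
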